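(* Let $a(x),b(x)\in\mathbb{F}_2[x]/\langle x^n-1\rangle$ both have weight at least two. Then the girth $g(G)$ of the Tanner graph associated with the generalized bicycle code defined by $a(x)$ and $b(x)$ satisfies $g(G)\le 8$.
   Context: Weight is the number of nonzero coefficients. The Tanner graph of the GB code defined by $a(x)=\sum a_tx^t$, $b(x)=\sum b_tx^t$ is the bipartite graph with $n$ check nodes $x_0,\dots,x_{n-1}$ (X-checks) and $2n$ qubit nodes $q_0,\dots,q_{n-1},q'_0,\dots,q'_{n-1}$, where $x_t$ is adjacent to $q_c$ iff $a_{t-c}=1$ and to $q'_c$ iff $b_{t-c}=1$ (indices mod $n$). The girth is the length of a shortest cycle. *)

(* Defs.v *)
From HB Require Import structures.
From mathcomp Require Import all_boot all_order all_algebra.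
Set Implicit Arguments. Unset Strict Implicit. Unset Printing Implicit Defensive.
Import GRing.Theory.
Local Open Scope ring_scope.

(* An element of F_2[x]/<x^n - 1> is represented by its coefficient vector
   (a_0, ..., a_{n-1}) : a(x) = \sum_t a_t x^t. *)
Definition gbpoly (n : nat) := {ffun 'I_n -> 'F_2}.

Definition weight n (a : gbpoly n) : nat := #|[set t | a t != 0]|.

(* a_{(t - c) mod n} = 1, i.e. there is u with a_u = 1 and t = c + u (mod n) *)
Definition gb_rel n (a : gbpoly n) (t c : 'I_n) : bool :=
  [exists u : 'I_n, (a u != 0) && ((c + u) %% n == t)%N].

(* Vertices of the Tanner graph: inl t = check x_t,
   inr (inl c) = qubit q_c, inr (inr c) = qubit q'_c. *)
Definition tanner_vertex (n : nat) := ('I_n + ('I_n + 'I_n))%type.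

Definition tanner_adj n (a b : gbpoly n) : rel (tanner_vertex n) :=
  fun v w =>
    match v, w with
    | inl t, inr (inl c) => gb_rel a t c
    | inr (inl c), inl t => gb_rel a t c
    | inl t, inr (inr c) => gb_rel b t c
    | inr (inr c), inl t => gb_rel b t c
    | _, _ => false
    end.

Definition is_graph_cycle (T : eqType) (e : rel T) (p : seq T) : bool :=
  [&& uniq p, (2 < size p)%N & cycle e p].

(* "girth(G) <= k": the shortest cycle has length at most k, i.e.
   some cycle has length at most k (an acyclic graph has infinite girth). *)
Definition girth_le (T : eqType) (e : rel T) (k : nat) : Prop :=
  exists p : seq T, is_graph_cycle e p /\ (size p <= k)%N.

(* Main.v *)
Require Import Defs.
From mathcomp Require Import all_boot all_order all_algebra.
From mathcomp Require Import ring.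
Import GRing.Theory.
Local Open Scope ring_scope.

Lemma gb_relI {k} {a : gbpoly k.+2} {t c u : 'I_k.+2} :
  a u != 0 -> t = c + u -> gb_rel a t c.
Proof.
move=> au ->; apply/existsP; exists u; rewrite au /=.
by [].
Qed.

Lemma two_supp k (a : gbpoly k) : (2 <= weight a)%N ->
  exists u1 u2, [/\ a u1 != 0, a u2 != 0 & u1 != u2].
Proof.
rewrite /weight => /card_gt1P [x [y [hx hy xy]]].
by exists x, y; rewrite !inE in hx hy.
Qed.

Lemma neq_of {k} {x y d : 'I_k.+2} : d != 0 -> (d = x - y \/ d = y - x) -> x != y.
Proof.
move=> dn [] e; apply/eqP => h; move: dn; by rewrite e h subrr eqxx.
Qed.

Lemma sumE1 (A B : eqType) (x y : A) : (@inl A B x == inl y) = (x == y).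
Proof. by []. Qed.
Lemma sumE2 (A B : eqType) (x y : B) : (@inr A B x == inr y) = (x == y).
Proof. by []. Qed.
Lemma sumE3 (A B : eqType) (x : A) (y : B) : (inl x == inr y) = false.
Proof. by []. Qed.
Lemma sumE4 (A B : eqType) (x : A) (y : B) : (inr y == inl x) = false.
Proof. by []. Qed.

Lemma four_cycle k (a b : gbpoly k.+2) (u1 u2 v1 v2 : 'I_k.+2) :
  a u1 != 0 -> a u2 != 0 -> b v1 != 0 -> b v2 != 0 -> u1 != u2 ->
  u1 - u2 = v2 - v1 -> girth_le (tanner_adj a b) 8%N.
Proof.
move=> a1 a2 b1 b2 u12 h.
  exists [:: inr (inl 0); inl u1; inr (inr (u1 - v2)); inl u2]; split => //.
  rewrite /is_graph_cycle /= !inE /= u12 /=.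
  rewrite (gb_relI (u:=u1)) ?add0r // (gb_relI (u:=v2)) //; last by ring.
  rewrite (gb_relI (u:=v1)) //; last first.
    have -> : u2 = u1 - (u1 - u2) by ring.
    by rewrite h; ring.
  by rewrite (gb_relI (u:=u2)) ?add0r.
Qed.

Local Close Scope ring_scope.
Theorem corollary1 (n : nat) (a b : gbpoly n) :
  (2 <= weight a)%N -> (2 <= weight b)%N ->
  girth_le (tanner_adj a b) 8.
Proof.
Local Open Scope ring_scope.
move=> /two_supp [u1 [u2 [a1 a2 u12]]] /two_supp [v1 [v2 [b1 b2 v12]]].
case: n a b u1 u2 v1 v2 a1 a2 b1 b2 u12 v12 => [|[|k]] a b u1 u2 v1 v2 a1 a2 b1 b2 u12 v12.
- by move: u12 a1; case: u1.
- by move: u12; rewrite (ord1 u1) (ord1 u2) eqxx.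
have du : u1 - u2 != 0 by rewrite subr_eq0.
have dv : v1 - v2 != 0 by rewrite subr_eq0.
case: (eqVneq (u1 - u2) (v2 - v1)) => h.
  exact: (@four_cycle _ _ _ _ _ _ _ a1 a2 b1 b2 u12 h).
case: (eqVneq (u1 - u2) (v1 - v2)) => h'.
  exact: (@four_cycle _ _ _ _ _ _ _ a1 a2 b2 b1 u12 h').
have dD' : u1 - u2 - v1 + v2 != 0.
    apply: contra h' => /eqP e; apply/eqP.
    have -> : u1 - u2 = (u1 - u2 - v1 + v2) + (v1 - v2) by ring.
    by rewrite e add0r.
have dD : u1 - u2 + v1 - v2 != 0.
    apply: contra h => /eqP e; apply/eqP.
    have -> : u1 - u2 = (u1 - u2 + v1 - v2) + (v2 - v1) by ring.
    by rewrite e add0r.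
  exists [:: inr (inl 0); inl u1; inr (inr (u1 - v1)); inl (u1 - v1 + v2);
             inr (inl (v2 - v1)); inl (v2 - v1 + u2); inr (inr (u2 - v1)); inl u2].
  split => //.
  rewrite /is_graph_cycle; apply/and3P; split => //; last first.
    rewrite /=.
    rewrite (gb_relI (u:=u1)) ?add0r // (gb_relI (u:=v1)) //; last by ring.
    rewrite (gb_relI (u:=v2)) // (gb_relI (u:=u1)) //; last by ring.
    rewrite (gb_relI (u:=u2)) // (gb_relI (u:=v2)) //; last by ring.
    rewrite (gb_relI (u:=v1)) //; last by ring.
    by rewrite (gb_relI (u:=u2)) ?add0r.
  rewrite /= !inE !andbT !(sumE1, sumE2, sumE3, sumE4) /= ?orbF.
  have n1 : 0 != v2 - v1 by apply: (neq_of (d := v1 - v2)) => //; left; rewrite sub0r opprB.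
  have n2 : u1 != u1 - v1 + v2 by apply: (neq_of (d := v1 - v2)) => //; left; ring.
  have n3 : u1 != v2 - v1 + u2 by apply: (neq_of (d := u1 - u2 + v1 - v2)) => //; left; ring.
  have n4 : u1 - v1 != u2 - v1 by apply: (neq_of (d := u1 - u2)) => //; left; ring.
  have n5 : u1 - v1 + v2 != v2 - v1 + u2 by apply: (neq_of (d := u1 - u2)) => //; left; ring.
  have n6 : u1 - v1 + v2 != u2 by apply: (neq_of (d := u1 - u2 - v1 + v2)) => //; left; ring.
  have n7 : v2 - v1 + u2 != u2 by apply: (neq_of (d := v1 - v2)) => //; right; ring.
  by rewrite (negbTE n1) (negbTE n2) (negbTE n3) (negbTE n4) (negbTE n5) (negbTE n6) n7 (negbTE u12).
Qed.
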